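(* There are uncountably many paving tropical ideals of degree $3$ in $\mathbb{B}[x^{\pm1}]$ (in particular, uncountably many zero-dimensional tropical ideals of degree $3$ in $\mathbb{B}[x^{\pm1}]$).
   Context: $\mathbb{B}=\{\infty,0\}$ with $\oplus=\min$ and multiplication $+$; $\operatorname{supp}(f)$ is the set of exponents with coefficient $\neq\infty$. A tropical ideal $I\subset\mathbb{B}[x^{\pm1}]$ is an ideal such that for all $f,g\in I$ and $u\in\operatorname{supp}(f)\cap\operatorname{supp}(g)$ there is $h\in I$ with $\operatorname{supp}(f)\Delta\operatorname{supp}(g)\subset\operatorname{supp}(h)\subset(\operatorname{supp}(f)\cup\operatorname{supp}(g))\setminus\{u\}$. Its underlying matroid on $\mathbb{Z}$ has as independent sets those containing no support of a polynomial of $I$. $I$ is zero-dimensional of degree $r$ iff this matroid has finite rank $r$. $I$ is a paving tropical ideal if it is zero-dimensional and every minimal support of a polynomial in $I$ (circuit) has size $\deg(I)$ or $\deg(I)+1$. *)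

(* Defs.v *)
From HB Require Import structures.
From mathcomp Require Import all_boot all_order all_algebra.
From mathcomp Require Import finmap.
Set Implicit Arguments. Unset Strict Implicit. Unset Printing Implicit Defensive.
Import GRing.Theory Num.Theory.
Local Open Scope fset_scope.

(* A Laurent polynomial over the Boolean semifield B = {oo, 0} (with
   oplus = min, otimes = +) is determined by its support, a finite set of
   exponents in Z: coefficient 0 on the support, oo elsewhere.
   The zero polynomial (all coefficients oo) is the empty set. *)
Definition Bpoly := {fset int}.

(* tropical sum f oplus g: coefficientwise min, i.e. union of supports *)
Definition Badd (f g : Bpoly) : Bpoly := f `|` g.
(* tropical product: x^a * x^b = x^(a+b), so support is the sumset *)
Definition Bmul (f g : Bpoly) : Bpoly := [fset (a + b)%R | a in f, b in g].

Definition supp (f : Bpoly) : {fset int} := f.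

Definition is_ideal (I : Bpoly -> Prop) : Prop :=
  I fset0 /\
  (forall f g, I f -> I g -> I (Badd f g)) /\
  (forall f g, I f -> I (Bmul g f)).

Definition tropical_ideal (I : Bpoly -> Prop) : Prop :=
  is_ideal I /\
  forall f g u, I f -> I g -> u \in supp f -> u \in supp g ->
    exists h, I h /\
      fsubset ((supp f `\` supp g) `|` (supp g `\` supp f)) (supp h) /\
      fsubset (supp h) ((supp f `|` supp g) `\ u).

(* independent (finite) sets of the underlying matroid on Z:
   they contain no support of a nonzero polynomial of I *)
Definition indep (I : Bpoly -> Prop) (S : {fset int}) : Prop :=
  forall f, I f -> f != fset0 -> ~ fsubset (supp f) S.

Definition matroid_rank (I : Bpoly -> Prop) (r : nat) : Prop :=
  (exists S, indep I S /\ #|` S| = r) /\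
  (forall S, indep I S -> (#|` S| <= r)%N).

Definition zero_dim_deg (I : Bpoly -> Prop) (r : nat) : Prop :=
  tropical_ideal I /\ matroid_rank I r.

Definition circuit (I : Bpoly -> Prop) (C : {fset int}) : Prop :=
  (exists f, I f /\ f != fset0 /\ supp f = C) /\
  (forall g, I g -> g != fset0 -> fsubset (supp g) C -> supp g = C).

Definition paving_tropical_ideal (I : Bpoly -> Prop) (d : nat) : Prop :=
  zero_dim_deg I d /\
  forall C, circuit I C -> #|` C| = d \/ #|` C| = d.+1.

(* Main.v *)
Require Import Defs.
From Stdlib Require Import Classical.
From mathcomp Require Import all_boot all_algebra finmap zify.
Set Implicit Arguments. Unset Strict Implicit. Unset Printing Implicit Defensive.
Import GRing.Theory Num.Theory.
Local Open Scope fset_scope.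
Local Open Scope ring_scope.

Definition p (k : nat) : int := (4 ^ k)%N%:Z.
Lemma p_gt0 k : 0 < p k.
Proof. rewrite /p ltz_nat expn_gt0. by []. Qed.
Lemma p_lt k k' : (k < k')%N -> 3 * p k < p k'.
Proof.
move=> H; rewrite /p.
have : (4 ^ k * 4 <= 4 ^ k')%N by rewrite -expnSr leq_exp2l.
have : (0 < 4 ^ k)%N by rewrite expn_gt0.
lia.
Qed.
Definition tri k c : {fset int} := [fset c; c + p k; c + 3 * p k].
Lemma in_tri k c x : (x \in tri k c) = [|| x == c, x == c + p k | x == c + 3 * p k].
Proof. by rewrite /tri !inE orbA. Qed.
Lemma card_uniq (s : seq int) (X : {fset int}) : uniq s -> {subset s <= X} -> (size s <= #|`X|)%N.
Proof.
move=> u sub; rewrite -(undup_id u) -card_fseq; apply: fsubset_leq_card.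
by apply/fsubsetP=> x; rewrite in_fset /=; apply: sub.
Qed.
Lemma uniq3 (a b c : int) : a != b -> a != c -> b != c -> uniq [:: a; b; c].
Proof. by move=> h1 h2 h3; rewrite /= !inE !negb_or h1 h2 h3. Qed.
Lemma uniq4 (a b c d : int) : a != b -> a != c -> a != d -> b != c -> b != d -> c != d ->
  uniq [:: a; b; c; d].
Proof. by move=> h1 h2 h3 h4 h5 h6; rewrite /= !inE !negb_or h1 h2 h3 h4 h5 h6. Qed.
Lemma uniq5 (a b c d e : int) : a != b -> a != c -> a != d -> a != e -> b != c -> b != d -> b != e ->
  c != d -> c != e -> d != e -> uniq [:: a; b; c; d; e].
Proof. by move=> h1 h2 h3 h4 h5 h6 h7 h8 h9 h10; rewrite /= !inE !negb_or h1 h2 h3 h4 h5 h6 h7 h8 h9 h10. Qed.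
Ltac neq := apply/eqP; lia.
Lemma card_tri k c : #|` tri k c| = 3%N.
Proof.
have := p_gt0 k => h.
apply/eqP; rewrite eqn_leq; apply/andP; split.
  rewrite /tri !cardfsU !cardfs1.
  set a := #|` _ `&` _|; set b := #|` _ `&` _|. lia.
apply: (@card_uniq [:: c; c + p k; c + 3 * p k]).
  by apply: uniq3; neq.
by move=> x; rewrite in_tri !inE orbA.
Qed.
Lemma lin k c k' c' x y : x != y -> x \in tri k c -> y \in tri k c ->
  x \in tri k' c' -> y \in tri k' c' -> k = k' /\ c = c'.
Proof.
move=> /eqP nxy hx hy hx' hy'; have h1 := p_gt0 k; have h2 := p_gt0 k'.
move: hx hy hx' hy'; rewrite !in_tri.
move=> /or3P[]/eqP hx /or3P[]/eqP hy /or3P[]/eqP hx' /or3P[]/eqP hy';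
case: (ltngtP k k') => hk; try (have h3 := p_lt hk; exfalso; lia);
subst k'; split => //; lia.
Qed.
Definition isTri (P : nat -> Prop) (X : {fset int}) := exists k c, P k /\ X = tri k c.
Definition Iof P (X : {fset int}) := X = fset0 \/ isTri P X \/
  ((4 <= #|`X|)%N /\ forall t, isTri P t -> fsubset t X -> (5 <= #|`X|)%N).

Lemma isTri_card P X : isTri P X -> #|`X| = 3%N.
Proof. by case=> k [c [_ ->]]; apply: card_tri. Qed.

Lemma Iof_card P X : Iof P X -> X != fset0 -> (3 <= #|`X|)%N.
Proof.
case=> [-> /eqP//|[/isTri_card -> //|[h _] _]].
by apply: leq_trans h.
Qed.

Lemma Iof_3 P X : Iof P X -> #|`X| = 3%N -> isTri P X.
Proof.
case=> [->|[//|[h _]]]; first by rewrite cardfs0.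
by move=> e; rewrite e in h.
Qed.

Lemma linT P t1 t2 x y : isTri P t1 -> isTri P t2 -> x != y -> x \in t1 -> y \in t1 ->
  x \in t2 -> y \in t2 -> t1 = t2.
Proof.
case=> k [c [_ ->]] [k' [c' [_ ->]]] nxy h1 h2 h3 h4.
by have [-> ->] := lin nxy h1 h2 h3 h4.
Qed.

Lemma two_el (A : {fset int}) : (2 <= #|`A|)%N -> exists x y, [/\ x != y, x \in A & y \in A].
Proof.
move=> h.
have : A != fset0 by rewrite -cardfs_gt0; apply: leq_trans h.
case/fset0Pn => x xA.
have : A `\ x != fset0.
  rewrite -cardfs_gt0; move: h; rewrite (cardfsD1 x) xA; lia.
case/fset0Pn => y; rewrite in_fsetD1 => /andP[yx yA].
by exists x, y; split => //; rewrite eq_sym.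
Qed.

Lemma card_sub_lt (A B : {fset int}) v : fsubset A B -> v \in B -> v \notin A -> (#|`A| < #|`B|)%N.
Proof.
move=> s vB vA.
have s' : fsubset A (B `\ v) by rewrite fsubsetD1 s vA.
have := fsubset_leq_card s'; rewrite [X in (_ <= _ -> (_ < X))%N](cardfsD1 v) vB; lia.
Qed.

Lemma I_union P f g : Iof P f -> Iof P g -> Iof P (f `|` g).
Proof.
move=> hf hg.
case: (eqVneq f fset0) => [->|f0]; first by rewrite fset0U.
case: (eqVneq g fset0) => [->|g0]; first by rewrite fsetU0.
case: (boolP (fsubset g f)) => [sgf|/fsubsetPn[v vg vf]]; first by rewrite (fsetUidPl _ _ sgf).
case: (boolP (fsubset f g)) => [sfg|/fsubsetPn[w wf wg]]; first by rewrite (fsetUidPr _ _ sfg).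
suff h5 : (5 <= #|`f `|` g|)%N.
  by right; right; split => //; apply: leq_trans h5.
have cf := Iof_card hf f0; have cg := Iof_card hg g0.
have l1 := card_sub_lt (fsubsetUl f g) (fsubsetP (fsubsetUr f g) _ vg) vf.
have l2 := card_sub_lt (fsubsetUr f g) (fsubsetP (fsubsetUl f g) _ wf) wg.
case: (leqP 4 #|`f|) => h4f; first lia.
case: (leqP 4 #|`g|) => h4g; first lia.
rewrite leqNgt; apply/negP => hlt.
have Tf' : isTri P f by apply: Iof_3 => //; lia.
have Tg' : isTri P g by apply: Iof_3 => //; lia.
have := cardfsUI f g => e.
have [x [y [nxy]]] : exists x y, [/\ x != y, x \in f `&` g & y \in f `&` g].
  apply: two_el; lia.
rewrite !in_fsetI => /andP[xf xg] /andP[yf yg].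
have efg := linT Tf' Tg' nxy xf yf xg yg.
by move: wg; rewrite -efg wf.
Qed.
Definition sh (a : int) (X : {fset int}) : {fset int} := [fset (a + x)%R | x in X].
Lemma mem_sh a X z : (z \in sh a X) = (z - a \in X).
Proof.
apply/imfsetP/idP => [[x xX ->]|h].
  by have -> : a + x - a = x by lia.
by exists (z - a) => //; lia.
Qed.
Lemma card_sh a X : #|` sh a X| = #|`X|.
Proof. by rewrite /sh card_imfset //=; apply: addrI. Qed.
Lemma seq_max (s : seq int) : s != [::] -> exists2 m, m \in s & forall x, x \in s -> x <= m.
Proof.
elim: s => [//|y s IH] _.
case: (eqVneq s [::]) => [->|sn].
  by exists y; [rewrite inE | move=> x; rewrite inE => /eqP ->].
have [m ms hm] := IH sn.
case: (lerP y m) => h.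
  exists m; first by rewrite inE ms orbT.
  by move=> x; rewrite inE => /orP[/eqP ->|/hm].
exists y; first by rewrite inE eqxx.
move=> x; rewrite inE => /orP[/eqP ->//|/hm]; lia.
Qed.
Lemma fset_max (X : {fset int}) : X != fset0 -> exists2 m, m \in X & forall x, x \in X -> x <= m.
Proof.
move=> X0; have : (enum_fset X) != [::].
  by apply: contra X0 => /eqP e; apply/eqP/fsetP => x; rewrite inE -[x \in X]/(x \in enum_fset X) e.
case/seq_max => m mX hm; exists m => //.
Qed.
Lemma mulP g f z : reflect (exists a b, [/\ a \in g, b \in f & z = a + b]) (z \in Bmul g f).
Proof.
rewrite /Bmul; apply: (iffP (imfset2P _ _ _ _ _)) => [[a ag [b bf ->]]|[a [b [ag bf ->]]]]; first by exists a, b.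
by exists a => //; exists b.
Qed.
Lemma in_mul g f a b : a \in g -> b \in f -> a + b \in Bmul g f.
Proof. by move=> ag bf; apply/mulP; exists a, b. Qed.
Lemma mem_tri k c z a : (z \in tri k (a + c)) = (z - a \in tri k c).
Proof.
rewrite !in_tri.
apply/or3P/or3P => -[]/eqP h;
  [apply: Or31|apply: Or32|apply: Or33|apply: Or31|apply: Or32|apply: Or33]; apply/eqP.
all: lia.
Qed.
Lemma sh_tri a k c : sh a (tri k c) = tri k (a + c).
Proof. by apply/fsetP => z; rewrite mem_sh [RHS](mem_tri k c z a). Qed.
Lemma I_sh P a X : Iof P X -> Iof P (sh a X).
Proof.
case=> [->|[[k [c [Pk ->]]]|[h4 h5]]].
- by left; apply/fsetP => z; rewrite mem_sh !inE.
- by right; left; exists k, (a + c); rewrite sh_tri.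
- right; right; rewrite card_sh; split => // t [k [c [Pk ->]]] st.
  apply: (h5 (tri k (c - a))); first by exists k, (c - a).
  apply/fsubsetP => z zt.
  have : z + a \in sh a X.
    apply: (fsubsetP st); rewrite (_ : c = a + (c - a)); last by lia.
    by rewrite (mem_tri k (c - a) (z + a) a); have -> : z + a - a = z by lia.
  by rewrite mem_sh; have -> : z + a - a = z by lia.
Qed.
Lemma Bmul1 a f : Bmul [fset a] f = sh a f.
Proof.
apply/fsetP => z; rewrite mem_sh; apply/mulP/idP => [[x [y [/[!inE]/eqP -> yf ->]]]|h].
  by have -> : a + y - a = y by lia.
by exists a, (z - a); split => //; [rewrite inE | lia].
Qed.
Lemma sh_sub a g f : a \in g -> fsubset (sh a f) (Bmul g f).
Proof.
move=> ag; apply/fsubsetP => z; rewrite mem_sh => h.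
have -> : z = a + (z - a) by lia.
by apply: in_mul.
Qed.
Lemma I_mul P f g : Iof P f -> Iof P (Bmul g f).
Proof.
move=> hf.
case: (eqVneq f fset0) => [e|f0].
  by left; apply/fsetP => z; rewrite inE; apply/negbTE/negP => /mulP [a [b [_]]]; rewrite e inE.
case: (eqVneq g fset0) => [e|g0].
  by left; apply/fsetP => z; rewrite inE; apply/negbTE/negP => /mulP [a [b []]]; rewrite e inE.
case: (leqP 2 #|`g|) => hg2; last first.
  have : #|`g| == 1%N by move: g0; rewrite -cardfs_gt0; lia.
  by case/cardfs1P => a ->; rewrite Bmul1; apply: I_sh.
have [a [b [ab ag bg]]] : exists a b, [/\ a < b, a \in g & b \in g].
  have [x [y [nxy xg yg]]] := two_el hg2.
  case: (ltrP x y) => h; first by exists x, y.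
  exists y, x; split => //; move/eqP: nxy; lia.
suff h5 : (5 <= #|` Bmul g f|)%N.
  by right; right; split => //; apply: leq_trans h5.
case: hf => [e|[[k [c [Pk e]]]|[h4 _]]]; first by rewrite e eqxx in f0.
- have h1 := p_gt0 k; rewrite e.
  case: (eqVneq (b - a) (2 * p k)) => hd.
  + apply: (@card_uniq [:: a + c; a + (c + p k); a + (c + 3 * p k); b + (c + 3 * p k); b + c]).
      by apply: uniq5; neq.
    apply/allP; rewrite /= andbT; apply/and5P; split; apply: in_mul => //;
      by rewrite in_tri eqxx ?orbT.
  + apply: (@card_uniq [:: a + c; a + (c + p k); a + (c + 3 * p k); b + (c + 3 * p k); b + (c + p k)]).
      by move/eqP: hd => hd; apply: uniq5; neq.
    apply/allP; rewrite /= andbT; apply/and5P; split; apply: in_mul => //;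
      by rewrite in_tri eqxx ?orbT.
- have [m mf hm] := fset_max f0.
  have := card_sub_lt (sh_sub f ag) (in_mul bg mf) _; rewrite card_sh.
  move=> H; apply: leq_trans (H _); first by [].
  rewrite mem_sh; apply/negP => /hm; lia.
Qed.

Lemma lemA P f g w : Iof P f -> Iof P g -> f != fset0 -> g != fset0 ->
  w \in f -> w \notin g -> (#|` f `|` g| <= 4)%N -> False.
Proof.
move=> hf hg f0 g0 wf wg h4.
have cf := Iof_card hf f0; have cg := Iof_card hg g0.
have l1 := card_sub_lt (fsubsetUr f g) (fsubsetP (fsubsetUl f g) _ wf) wg.
have Tg : isTri P g by apply: Iof_3 => //; lia.
case: (boolP (fsubset (f `|` g) f)) => [s|/fsubsetPn [v vfg vf]].
  have := fsubset_leq_card s; have := fsubset_leq_card (fsubsetUl f g) => c1 c2.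
  case: hf => [e|[Tf|[_ h5]]]; first by rewrite e eqxx in f0.
    by move: (isTri_card Tf); lia.
  have := h5 g Tg (fsubset_trans (fsubsetUr f g) s); lia.
have l2 := card_sub_lt (fsubsetUl f g) vfg vf.
have Tf : isTri P f by apply: Iof_3 => //; lia.
have := cardfsUI f g => e.
have [x [y [nxy]]] : exists x y, [/\ x != y, x \in f `&` g & y \in f `&` g].
  apply: two_el; lia.
rewrite !in_fsetI => /andP[xf xg] /andP[yf yg].
have efg := linT Tf Tg nxy xf yf xg yg.
by move: wg; rewrite -efg wf.
Qed.

Lemma lemB P (t g : {fset int}) u z (U : {fset int}) : isTri P t -> fsubset t U -> (#|`U| <= 4)%N ->
  z \in U -> z \notin t -> u \notin U -> u \in g -> z \notin g ->
  (forall y, y \in g -> y = u \/ y \in U) -> Iof P g -> False.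
Proof.
move=> Tt tU U4 zU zt uU ug zg gU hg.
have ct := isTri_card Tt.
have tUz : t = U `\ z.
  apply/eqP; rewrite eqEfcard fsubsetD1 tU zt /= ct.
  move: U4; rewrite (cardfsD1 z U) zU /=; lia.
have gut : fsubset g (u |` t).
  apply/fsubsetP => y yg; rewrite in_fset1U; case: (gU y yg) => [->|yU]; first by rewrite eqxx.
  rewrite tUz in_fsetD1 yU andbT; apply/orP; right; apply/eqP => e; by move: zg; rewrite -e yg.
have ut : u \notin t by apply: contra uU; apply: (fsubsetP tU).
have cut : #|` u |` t| = 4%N by rewrite cardfsU1 ut ct.
have g0 : g != fset0 by apply/fset0Pn; exists u.
have cg := Iof_card hg g0.
have cg4 := fsubset_leq_card gut.
have := cardfsUI g t => e.
have cgt : (#|` g `|` t| <= 4)%N.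
  rewrite -cut; apply: fsubset_leq_card; rewrite fsubUset gut; exact: fsubsetU1.
case: hg => [e0|[Tg|[h4 h5]]]; first by rewrite e0 eqxx in g0.
  have [x [y [nxy]]] : exists x y, [/\ x != y, x \in g `&` t & y \in g `&` t].
    apply: two_el; move: (isTri_card Tg); lia.
  rewrite !in_fsetI => /andP[xg xt] /andP[yg yt].
  have egt := linT Tg Tt nxy xg yg xt yt.
  by move: ut; rewrite -egt ug.
have egu : g = u |` t.
  by apply/eqP; rewrite eqEfcard gut cut.
have := h5 t Tt; rewrite egu fsubsetU1 cut; by move=> /(_ isT).
Qed.

Lemma I_elim P f g u : Iof P f -> Iof P g -> u \in f -> u \in g ->
  exists h, Iof P h /\ fsubset ((f `\` g) `|` (g `\` f)) h /\ fsubset h ((f `|` g) `\ u).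
Proof.
move=> hf hg uf ug.
have f0 : f != fset0 by apply/fset0Pn; exists u.
have g0 : g != fset0 by apply/fset0Pn; exists u.
set U := (f `|` g) `\ u.
have sdU : fsubset ((f `\` g) `|` (g `\` f)) U.
  apply/fsubsetP => z; rewrite /U in_fsetD1 in_fsetU !in_fsetD in_fsetU.
  move=> /orP[/andP[zg zf]|/andP[zf zg]].
    by rewrite zf andbT; apply/eqP => e; move: zg; rewrite e ug.
  by rewrite zg orbT andbT; apply/eqP => e; move: zf; rewrite e uf.
have cU : #|`f `|` g| = (1 + #|`U|)%N by rewrite (cardfsD1 u) in_fsetU uf.
have uU : u \notin U by rewrite /U in_fsetD1 eqxx.
case: (eqVneq f g) => [efg|fg].
  exists fset0; split; [by left|split]; last exact: fsub0set.
  by rewrite efg fsetDv fsetU0 fsubset_refl.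
case: (leqP 5 #|`U|) => h5.
  exists U; split; last by split => //; exact: fsubset_refl.
  by right; right; split => //; exact: ltnW.
have hw : exists w, (w \in f /\ w \notin g) \/ (w \in g /\ w \notin f).
  case: (boolP (fsubset f g)) => [sfg|/fsubsetPn[w wf wg]]; last by exists w; left.
  case: (boolP (fsubset g f)) => [sgf|/fsubsetPn[w wg wf]]; last by exists w; right.
  by exfalso; move/negP: fg; apply; rewrite eqEfsubset sfg sgf.
case: (classic (exists t, isTri P t /\ fsubset t U)) => [[t [Tt tU]]|nt].
  exists t; split; [by right; left|split => //].
  apply/fsubsetP => z zsd.
  case: (boolP (z \in t)) => // zt; exfalso.
  have zU := fsubsetP sdU z zsd.
  move: zsd; rewrite in_fsetU !in_fsetD => /orP[/andP[zg zf]|/andP[zf zg]].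
  - apply: (lemB Tt tU _ zU zt uU ug zg _ hg); first lia.
    move=> y yg; case: (eqVneq y u) => [->|yu]; [by left|right].
    by rewrite /U in_fsetD1 yu in_fsetU yg orbT.
  - apply: (lemB Tt tU _ zU zt uU uf zf _ hf); first lia.
    move=> y yf; case: (eqVneq y u) => [->|yu]; [by left|right].
    by rewrite /U in_fsetD1 yu in_fsetU yf.
case: (leqP 4 #|`U|) => h4.
  exists U; split; last by split => //; exact: fsubset_refl.
  right; right; split => // t Tt tU; exfalso; apply: nt; by exists t.
exfalso; have [w [[wf wg]|[wg wf]]] := hw.
  by apply: (lemA hf hg f0 g0 wf wg); lia.
by apply: (lemA hg hf g0 f0 wg wf); rewrite fsetUC; lia.
Qed.

Lemma trop P : tropical_ideal (Iof P).
Proof.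
split; last by move=> f g u; exact: I_elim.
split; first by left.
split; first by move=> f g; exact: I_union.
by move=> f g; exact: I_mul.
Qed.

Lemma card_le3 (a b c : int) : (#|` [fset a; b; c]| <= 3)%N.
Proof.
rewrite !cardfsU !cardfs1.
set x := #|` _ `&` _|; set y := #|` _ `&` _|. lia.
Qed.

Lemma rank P : matroid_rank (Iof P) 3.
Proof.
split.
- exists [fset 0; 1; 2]; split.
    move=> f hf f0 /fsubsetP s.
    case: hf => [e|[[k [c [Pk e]]]|[h4 _]]]; first by rewrite e eqxx in f0.
      have h1 := p_gt0 k.
      have m1 : c \in supp f by rewrite /supp e in_tri; apply/or3P; apply: Or31.
      have m2 : c + 3 * p k \in supp f by rewrite /supp e in_tri; apply/or3P; apply: Or33.
      move: (s _ m1) (s _ m2); rewrite !in_fsetU !in_fset1 => h2 h3.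
      move: h2 h3 => /orP[/orP[]|]/eqP h2 /orP[/orP[]|]/eqP h3; lia.
    have sf : fsubset f [fset 0; 1; 2] by apply/fsubsetP.
    have := leq_trans (fsubset_leq_card sf) (card_le3 _ _ _); lia.
  apply/eqP; rewrite eqn_leq card_le3 /=.
  apply: (@card_uniq [:: 0; 1; 2]); first by [].
  by move=> x; rewrite !inE orbA.
- move=> S hS; rewrite leqNgt; apply/negP => h4.
  have S0 : S != fset0 by rewrite -cardfs_gt0; apply: leq_trans h4.
  case: (classic (exists t, isTri P t /\ fsubset t S)) => [[t [Tt tS]]|nt].
    apply: (hS t _ _ tS); first by right; left.
    by rewrite -cardfs_gt0 (isTri_card Tt).
  apply: (hS S _ S0 (fsubset_refl S)).
  right; right; split => // t Tt tS; exfalso; apply: nt; by exists t.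
Qed.

Lemma paving P C : circuit (Iof P) C -> #|`C| = 3%N \/ #|`C| = 4%N.
Proof.
case=> [[f [hf [f0 e]]] hmin]; rewrite /supp in e; subst C.
have cf := Iof_card hf f0.
case: (leqP 5 #|`f|) => h5; last by lia.
exfalso.
have [x xf] := fset0Pn _ f0.
have cQ : #|`f| = (1 + #|`f `\ x|)%N by rewrite (cardfsD1 x) xf.
have sQ : fsubset (f `\ x) f by apply: fsubsetDl.
have hQ : Iof P (f `\ x).
  right; right; split; first lia.
  move=> t Tt tQ.
  have := hmin t (or_intror (or_introl Tt)) _ (fsubset_trans tQ sQ).
  rewrite -cardfs_gt0 (isTri_card Tt) => /(_ isT) et.
  by move: h5; rewrite -et (isTri_card Tt).
have Q0 : f `\ x != fset0 by rewrite -cardfs_gt0; lia.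
have := hmin _ hQ Q0 sQ; rewrite /supp => eQ.
by move: xf; rewrite -{1}eQ in_fsetD1 eqxx.
Qed.

Theorem mainTheorem8 :
  ~ exists F : nat -> (Bpoly -> Prop),
      forall I : Bpoly -> Prop, paving_tropical_ideal I 3 ->
        exists n : nat, forall f : Bpoly, I f <-> F n f.
Proof.
move=> [F HF].
pose P := fun k => ~ F k (tri k 0).
have hp : paving_tropical_ideal (Iof P) 3 := conj (conj (trop P) (rank P)) (@paving P).
have [n Hn] := HF _ hp.
have key : Iof P (tri n 0) <-> P n.
  split; last by move=> Pn; right; left; exists n, 0.
  case=> [e|[[k [c [Pk e]]]|[h4 _]]].
  - by move: (card_tri n 0); rewrite e cardfs0.
  - have h1 := p_gt0 n.
    have x0 : (0 : int) \in tri n 0 by rewrite in_tri eqxx.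
    have xp : p n \in tri n 0 by rewrite in_tri add0r eqxx orbT.
    have nx : (0 : int) != p n by rewrite eq_sym; apply/eqP; lia.
    have x0' : (0 : int) \in tri k c by rewrite -e.
    have xp' : p n \in tri k c by rewrite -e.
    have [nk _] := lin nx x0 xp x0' xp'.
    by rewrite nk.
  - by move: h4; rewrite card_tri.
have nF : ~ F n (tri n 0) by move=> h; apply: (proj1 key (proj2 (Hn _) h)).
exact: (nF (proj1 (Hn _) (proj2 key nF))).
Qed.
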